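(* Assume the penalty $g$ satisfies A1–A4. Then for every $X=[x_1,\dots,x_n]\in\mathbb{R}^{m\times n}$ and every $D\in\mathbb{R}^{m\times d}$, with the norm $\|\cdot\|=\|\cdot\|_{1\to2}$, $$L_X(D)\le\frac1n\sum_{i=1}^n\|x_i\|_2\,\bar g\big(\tfrac12\|x_i\|_2^2\big)=L_X(\bar g),\qquad C_X(D)\le\frac1{2n}\sum_{i=1}^n\big[\bar g(\|x_i\|_2^2/2)\big]^2.$$
   Context: A penalty is a function $g:\mathbb{R}^d\to\mathbb{R}\cup\{+\infty\}$. A1: $g\ge0$; A2: $g$ lower semi-continuous; A3: $g(\alpha)\to+\infty$ as $\|\alpha\|\to\infty$; A4: $g(0)=0$. $\bar g(t)=\sup\{\|\alpha\|_1:\ g(\alpha)\le t\}$. $\mathcal{L}_x(D,\alpha)=\tfrac12\|x-D\alpha\|_2^2+g(\alpha)$, $f_x(D)=\inf_\alpha\mathcal{L}_x(D,\alpha)$. $\|\Delta\|_{1\to2}=\max_j\|\delta_j\|_2$ with dual norm $\|\cdot\|_\star$ (w.r.t. Frobenius inner product). For $\epsilon>0$, $\mathfrak{A}_\epsilon(X,D)=\{A=[\alpha_1,\dots,\alpha_n]:\ \mathcal{L}_{x_i}(D,\alpha_i)\le f_{x_i}(D)+\epsilon\ \forall i\}$; $L_X(D)=\inf_{\epsilon>0}\sup_{A\in\mathfrak{A}_\epsilon(X,D)}\frac1n\|(X-DA)A^\top\|_\star$, $C_X(D)=\inf_{\epsilon>0}\sup_{A\in\mathfrak{A}_\epsilon(X,D)}\frac1{2n}\sum_i\|\alpha_i\|_1^2$.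 *)

(* Defs.v *)
From Stdlib Require Import Reals ClassicalEpsilon.
From mathcomp Require Import all_boot.
Set Implicit Arguments. Unset Strict Implicit. Unset Printing Implicit Defensive.
Open Scope R_scope.

Inductive ER := Fin (r : R) | PInf | MInf.

Definition ER_le (a b : ER) : Prop :=
  match a, b with
  | MInf, _ => True
  | _, PInf => True
  | Fin x, Fin y => x <= y
  | _, _ => False
  end.
Definition ER_lt (a b : ER) : Prop := ~ ER_le b a.

Definition ER_add (a b : ER) : ER :=
  match a, b with
  | Fin x, Fin y => Fin (x + y)
  | PInf, _ | _, PInf => PInf
  | _, _ => MInf
  end.

(* scaling by a real c >= 0, with the convention 0 * (+-oo) = 0 *)
Definition ER_scale (c : R) (y : ER) : ER :=
  match y with
  | Fin r => Fin (c * r)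
  | PInf => if Req_dec_T c 0 then Fin 0 else PInf
  | MInf => if Req_dec_T c 0 then Fin 0 else MInf
  end.

Definition ER_sq (y : ER) : ER :=
  match y with Fin r => Fin (r * r) | _ => PInf end.

Definition ER_sum (n : nat) (F : 'I_n -> ER) : ER := \big[ER_add/Fin 0]_(i < n) F i.

Definition is_lubE (P : ER -> Prop) (s : ER) : Prop :=
  (forall y, P y -> ER_le y s) /\ (forall b, (forall y, P y -> ER_le y b) -> ER_le s b).
Definition is_glbE (P : ER -> Prop) (s : ER) : Prop :=
  (forall y, P y -> ER_le s y) /\ (forall b, (forall y, P y -> ER_le b y) -> ER_le b s).
Definition SupE (P : ER -> Prop) : ER := epsilon (inhabits MInf) (is_lubE P).
Definition InfE (P : ER -> Prop) : ER := epsilon (inhabits PInf) (is_glbE P).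

Definition vec (k : nat) := 'I_k -> R.
Definition mat (p q : nat) := 'I_p -> 'I_q -> R.

Definition sumR (k : nat) (F : 'I_k -> R) : R := \big[Rplus/0]_(i < k) F i.
Definition norm1 (k : nat) (a : vec k) : R := sumR (fun i => Rabs (a i)).
Definition norm2 (k : nat) (a : vec k) : R := sqrt (sumR (fun i => a i * a i)).
Definition mulmv (p q : nat) (D : mat p q) (a : vec q) : vec p :=
  fun r => sumR (fun j => D r j * a j).
Definition subv (k : nat) (a b : vec k) : vec k := fun i => a i - b i.

Definition penA1 (d : nat) (g : vec d -> ER) : Prop := forall a, ER_le (Fin 0) (g a).
(* lower semi-continuity: for every real t < g(a), g > t on a neighbourhood of a *)
Definition penA2 (d : nat) (g : vec d -> ER) : Prop :=
  forall (a : vec d) (t : R), ER_lt (Fin t) (g a) ->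
    exists delta, 0 < delta /\
      forall b : vec d, norm1 (subv b a) < delta -> ER_lt (Fin t) (g b).
(* coercivity: g(a) -> +oo as ||a|| -> oo *)
Definition penA3 (d : nat) (g : vec d -> ER) : Prop :=
  forall M : R, exists r : R, forall a : vec d, r < norm1 a -> ER_lt (Fin M) (g a).
Definition penA4 (d : nat) (g : vec d -> ER) : Prop := g (fun _ => 0) = Fin 0.

Definition gbar (d : nat) (g : vec d -> ER) (t : R) : ER :=
  SupE (fun y => exists a : vec d, ER_le (g a) (Fin t) /\ y = Fin (norm1 a)).

Definition Lx (m d : nat) (g : vec d -> ER) (x : vec m) (D : mat m d) (a : vec d) : ER :=
  ER_add (Fin (/ 2 * (norm2 (subv x (mulmv D a))) ^ 2)) (g a).
Definition fx (m d : nat) (g : vec d -> ER) (x : vec m) (D : mat m d) : ER :=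
  InfE (fun y => exists a : vec d, y = Lx g x D a).

(** X = [x_1..x_n] (columns X i), A = [a_1..a_n] (columns A i). A \in frakA_eps(X,D). *)
Definition inA (m d n : nat) (g : vec d -> ER) (eps : R) (X : 'I_n -> vec m)
  (D : mat m d) (A : 'I_n -> vec d) : Prop :=
  forall i, ER_le (Lx g (X i) D (A i)) (ER_add (fx g (X i) D) (Fin eps)).

Definition resid (m d n : nat) (X : 'I_n -> vec m) (D : mat m d) (A : 'I_n -> vec d)
  : mat m d :=
  fun r j => sumR (fun i => (X i r - mulmv D (A i) r) * A i j).

Definition frob (p q : nat) (M N : mat p q) : R := sumR (fun r => sumR (fun j => M r j * N r j)).
Definition norm12 (p q : nat) (N : mat p q) : R :=
  \big[Rmax/0]_(j < q) norm2 (fun r => N r j).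
Definition dualnorm12 (p q : nat) (M : mat p q) : ER :=
  SupE (fun y => exists N : mat p q, norm12 N <= 1 /\ y = Fin (frob M N)).

Definition LX (m d n : nat) (g : vec d -> ER) (X : 'I_n -> vec m) (D : mat m d) : ER :=
  InfE (fun y => exists eps, 0 < eps /\
    y = SupE (fun z => exists A, inA g eps X D A /\
                 z = ER_scale (/ INR n) (dualnorm12 (resid X D A)))).
Definition CX (m d n : nat) (g : vec d -> ER) (X : 'I_n -> vec m) (D : mat m d) : ER :=
  InfE (fun y => exists eps, 0 < eps /\
    y = SupE (fun z => exists A, inA g eps X D A /\
                 z = Fin (/ (2 * INR n) * sumR (fun i => (norm1 (A i)) ^ 2)))).

(* Main.v *)
Require Import Defs.
From HB Require Import structures.
From Stdlib Require Import Reals Lra Lia ClassicalEpsilon Classical.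
From mathcomp Require Import all_boot.
Open Scope R_scope.

HB.instance Definition _ := Monoid.isComLaw.Build R 0 Rplus (fun a b c => esym (Rplus_assoc a b c)) Rplus_comm Rplus_0_l.
HB.instance Definition _ := Monoid.isMulLaw.Build R 0 Rmult Rmult_0_l Rmult_0_r.
HB.instance Definition _ := Monoid.isAddLaw.Build R Rmult Rplus Rmult_plus_distr_r Rmult_plus_distr_l.

Definition cvs (u : nat -> R) l := forall e, 0 < e -> exists N, forall k, le N k -> Rabs (u k - l) < e.
Definition sincr (phi : nat -> nat) := forall k, lt (phi k) (phi (S k)).

Lemma sincr_ge {phi} : sincr phi -> forall k, le k (phi k).
Proof. move=> H; elim=> [|k IH]; first lia. have := H k; lia. Qed.

Lemma cvs_sub u l psi : cvs u l -> sincr psi -> cvs (fun k => u (psi k)) l.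
Proof.
move=> H Hp e He; have [N HN] := H e He; exists N => k Hk; apply: HN.
have := sincr_ge Hp k; lia.
Qed.

Lemma abs_le_inv x r : Rabs x <= r -> - r <= x <= r.
Proof. unfold Rabs; destruct Rcase_abs; lra. Qed.

Lemma bw1 (u : nat -> R) r : (forall k, Rabs (u k) <= r) ->
  exists phi, sincr phi /\ exists l, cvs (fun k => u (phi k)) l.
Proof.
move=> Hb.
have [l Hl] := Bolzano_Weierstrass u (fun c => - r <= c <= r) (compact_P3 (- r) r)
  ltac:(move=> k; have := Hb k; move/abs_le_inv; lra).
have H : forall k N, exists p, le N p /\ Rabs (u p - l) < / INR (S k).
{ move=> k N.
  have Hpos : 0 < / INR (S k) by apply: Rinv_0_lt_compat; apply: lt_0_INR; lia.
  have [p [Hp1 Hp2]] := Hl (disc l (mkposreal _ Hpos)) N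
    ltac:(exists (mkposreal _ Hpos) => y Hy; exact Hy).
  by exists p; split. }
pose f k N := proj1_sig (constructive_indefinite_description _ (H k N)).
have Hf : forall k N, le N (f k N) /\ Rabs (u (f k N) - l) < / INR (S k).
{ move=> k N; exact: (proj2_sig (constructive_indefinite_description _ (H k N))). }
pose phi := fix phi k := f k (match k with 0%nat => 0%nat | S k' => S (phi k') end).
exists phi; split.
{ move=> k; have [H1 _] := Hf (S k) (S (phi k)); rewrite [phi (S k)]/=; lia. }
exists l => e He.
have [N [HN1 HN2]] := archimed_cor1 e He.
exists N => k Hk.
have [_ H2] : le 0 0 /\ Rabs (u (phi k) - l) < / INR (S k) by case: k Hk => [|k] Hk; split; try lia; apply: (proj2 (Hf _ _)).
apply: (Rlt_le_trans _ _ _ H2); apply: Rle_trans (Rlt_le _ _ HN1).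
apply: Rinv_le_contravar; first by apply: lt_0_INR. apply: le_INR; lia.
Qed.

Lemma bwd d (u : nat -> vec d) r : (forall k j, Rabs (u k j) <= r) ->
  exists phi, sincr phi /\ exists b : vec d, forall j, cvs (fun k => u (phi k) j) (b j).
Proof.
move=> Hb.
have Hc : forall c, exists phi, sincr phi /\ forall j : 'I_d, lt (nat_of_ord j) c ->
   exists l, cvs (fun k => u (phi k) j) l.
{ elim=> [|c [phi [Hphi IH]]].
  - exists id; split; [move=> k /=; lia| move=> j Hj; lia].
  - case: (@ltP c d) => Hcd.
    + pose j0 := Ordinal (introT ltP Hcd).
      have [psi [Hpsi [l Hl]]] := bw1 (fun k => u (phi k) j0) r (fun k => Hb _ _).
      exists (fun k => phi (psi k)); split.
      * move=> k; have := Hpsi k => H1.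
        have Hm : forall a b, lt a b -> lt (phi a) (phi b).
        { move=> a b; elim: b => [|b IHb] Hab; first lia.
          have := Hphi b; case: (Nat.eq_dec a b) => [->|Hne]; first lia.
          have := IHb ltac:(lia); lia. }
        exact: Hm.
      * move=> j Hj. case: (Nat.eq_dec (nat_of_ord j) c) => Hjc.
        -- exists l. have -> : j = j0 by apply: val_inj.
           exact: Hl.
        -- have [l' Hl'] := IH j ltac:(lia).
           exists l'; exact: (cvs_sub (fun k => u (phi k) j) _ _ Hl' Hpsi).
    + exists phi; split => // j Hj; apply: IH.
      have := ltn_ord j => /ltP; lia. }
have [phi [Hphi H]] := Hc d.
exists phi; split => //.
have H' : forall j : 'I_d, exists l, cvs (fun k => u (phi k) j) l.
{ move=> j; apply: H; apply/ltP; exact: ltn_ord. }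
exists (fun j => proj1_sig (constructive_indefinite_description _ (H' j))).
move=> j; exact: (proj2_sig (constructive_indefinite_description _ (H' j))).
Qed.

Lemma sumR_split {k} (f g : 'I_k -> R) : sumR (fun i => f i + g i) = sumR f + sumR g.
Proof. by rewrite /sumR big_split. Qed.
Lemma sumR_distr {k} c (f : 'I_k -> R) : c * sumR f = sumR (fun i => c * f i).
Proof. by rewrite /sumR big_distrr. Qed.
Lemma sumR_exch {p q} (F : 'I_p -> 'I_q -> R) : sumR (fun i => sumR (fun j => F i j)) = sumR (fun j => sumR (fun i => F i j)).
Proof. by rewrite /sumR exchange_big. Qed.
Lemma sumR_le {k} (f g : 'I_k -> R) : (forall i, f i <= g i) -> sumR f <= sumR g.
Proof. move=> H; rewrite /sumR; apply: (big_ind2 (fun x y => x <= y)) => //; [lra| move=> *; lra]. Qed.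
Lemma sumR_ext {k} (f g : 'I_k -> R) : (forall i, f i = g i) -> sumR f = sumR g.
Proof. by move=> H; rewrite /sumR; apply: eq_bigr. Qed.
Lemma sumR_const {k} c : sumR (fun _ : 'I_k => c) = INR k * c.
Proof. rewrite /sumR big_const_ord; elim: k => [|k IH] /=; first lra. rewrite IH; change (c + INR k * c = INR (S k) * c); rewrite S_INR; lra. Qed.
Lemma sumR_ge0 {k} (f : 'I_k -> R) : (forall i, 0 <= f i) -> 0 <= sumR f.
Proof. move=> H; have := sumR_le (fun _ => 0) f H; rewrite sumR_const; lra. Qed.
Lemma term_le_sumR {k} (f : 'I_k -> R) j : (forall i, 0 <= f i) -> f j <= sumR f.
Proof.
move=> H; rewrite /sumR (bigD1 j) //=.
have : 0 <= \big[Rplus/0]_(i < k | i != j) f i.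
{ apply: (big_ind (fun x => 0 <= x)) => //; [lra| move=> *; lra]. }
move=> Hs; rewrite -{1}(Rplus_0_r (f j)); exact: Rplus_le_compat_l Hs.
Qed.

Lemma norm1_ge0 {k} (a : vec k) : 0 <= norm1 a.
Proof. apply: sumR_ge0 => i; exact: Rabs_pos. Qed.
Lemma abs_le_norm1 {k} (a : vec k) j : Rabs (a j) <= norm1 a.
Proof. apply: (term_le_sumR (fun i => Rabs (a i))) => i; exact: Rabs_pos. Qed.
Lemma norm1_tri {k} (a b : vec k) : norm1 a <= norm1 b + norm1 (subv a b).
Proof.
rewrite /norm1 -sumR_split; apply: sumR_le => i; rewrite /subv.
have := Rabs_triang (b i) (a i - b i); have -> : b i + (a i - b i) = a i by ring. lra.
Qed.
Lemma norm1_0 {k} : norm1 (fun _ : 'I_k => 0) = 0.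
Proof. rewrite /norm1 (sumR_ext _ (fun _ => 0)) ?sumR_const; [ring| move=> i; exact: Rabs_R0]. Qed.

Lemma cvs_norm1 d (w : nat -> vec d) (b : vec d) : (forall j, cvs (fun k => w k j) (b j)) ->
  forall e, 0 < e -> exists N, forall k, le N k -> norm1 (subv (w k) b) < e.
Proof.
move=> H e He.
have He' : 0 < e / (INR d + 1) by apply: Rdiv_lt_0_compat => //; have := pos_INR d; lra.
have Hc : forall c, exists N, forall j : 'I_d, lt (nat_of_ord j) c -> forall k, le N k ->
   Rabs (w k j - b j) < e / (INR d + 1).
{ elim=> [|c [N IH]]; first by exists 0%nat => j Hj; lia.
  case: (@ltP c d) => Hcd.
  - pose j0 := Ordinal (introT ltP Hcd).
    have [N0 HN0] := H j0 _ He'.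
    exists (Nat.max N N0) => j Hj k Hk.
    case: (Nat.eq_dec (nat_of_ord j) c) => Hjc.
    + have -> : j = j0 by apply: val_inj.
      apply: HN0; lia.
    + apply: IH; lia.
  - exists N => j Hj; apply: IH. have := ltn_ord j => /ltP; lia. }
have [N HN] := Hc d; exists N => k Hk.
apply: (Rle_lt_trans _ (sumR (fun _ : 'I_d => e / (INR d + 1)))).
- apply: sumR_le => j; apply: Rlt_le; apply: HN => //; apply/ltP; exact: ltn_ord.
- rewrite sumR_const. have Hd := pos_INR d.
  apply: (Rmult_lt_reg_r (INR d + 1)); first lra.
  have -> : INR d * (e / (INR d + 1)) * (INR d + 1) = INR d * e by field; lra.
  nra.
Qed.
Lemma lub_ex (P : ER -> Prop) : exists s, is_lubE P s.
Proof.
destruct (classic (P PInf)) as [HP|HP].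
{ exists PInf; split; [by case|]. move=> b Hb; exact: Hb _ HP. }
destruct (classic (exists r, P (Fin r))) as [[r0 Hr0]|Hn].
- destruct (classic (bound (fun r => P (Fin r)))) as [Hb|Hb].
  + have [l [Hl1 Hl2]] := completeness _ Hb (ex_intro _ r0 Hr0).
    exists (Fin l); split.
    * case=> [r||] Hy //=; exact: Hl1.
    * case=> [m||] Hm //=; last by apply: (Hm _ Hr0).
      apply: Hl2 => r Hr; exact: (Hm _ Hr).
  + exists PInf; split; first by case.
    case=> [m||] Hm //=.
    * apply: Hb; exists m => r Hr; exact: (Hm _ Hr).
    * exact: (Hm _ Hr0).
- exists MInf; split.
  + case=> [r||] Hy //=; apply: Hn; by exists r.
  + by case.
Qed.

Lemma glb_ex (P : ER -> Prop) : exists s, is_glbE P s.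
Proof.
destruct (classic (P MInf)) as [HP|HP].
{ exists MInf; split; [by case|]. move=> b Hb; exact: Hb _ HP. }
destruct (classic (exists r, P (Fin r))) as [[r0 Hr0]|Hn].
- destruct (classic (bound (fun r => P (Fin (- r))))) as [Hb|Hb].
  + have [l [Hl1 Hl2]] := completeness _ Hb (ex_intro (fun r => P (Fin (- r))) (- r0) ltac:(cbv beta; rewrite Ropp_involutive; exact Hr0)).
    exists (Fin (- l)); split.
    * case=> [r||] Hy //=; try (exfalso; exact: HP Hy).
      have := Hl1 (- r); rewrite Ropp_involutive => H; have := H Hy; lra.
    * case=> [m||] Hm //=; last by apply: (Hm _ Hr0).
      enough (l <= - m) by lra.
      apply: Hl2 => r Hr; have := Hm _ Hr => /= ; lra.
  + exists MInf; split; first by case.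
    case=> [m||] Hm //=.
    * apply: Hb; exists (- m) => r Hr; have := Hm _ Hr => /=; lra.
    * exact: (Hm _ Hr0).
- exists PInf; split.
  + case=> [r||] Hy //=; apply: Hn; by exists r.
  + by case.
Qed.

Lemma SupE_spec P : is_lubE P (SupE P).
Proof. exact: (epsilon_spec (inhabits MInf) (is_lubE P) (lub_ex P)). Qed.
Lemma InfE_spec P : is_glbE P (InfE P).
Proof. exact: (epsilon_spec (inhabits PInf) (is_glbE P) (glb_ex P)). Qed.

Lemma SupE_le {P} {b} : (forall y, P y -> ER_le y b) -> ER_le (SupE P) b.
Proof. move=> H; exact: (proj2 (SupE_spec P) b H). Qed.
Lemma le_SupE {P} {y} : P y -> ER_le y (SupE P).
Proof. move=> H; exact: (proj1 (SupE_spec P) y H). Qed.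
Lemma InfE_le {P} {y} : P y -> ER_le (InfE P) y.
Proof. move=> H; exact: (proj1 (InfE_spec P) y H). Qed.

Lemma InfE_le_Fin P V : (forall e, 0 < e -> exists y, P y /\ ER_le y (Fin (V + e))) ->
  ER_le (InfE P) (Fin V).
Proof.
move=> H. case E: (InfE P) => [s||] //=.
- apply: Rnot_lt_le => Hlt.
  have [y [Py Hy]] := H ((s - V)/2) ltac:(lra).
  have := InfE_le Py; rewrite E; case: y Py Hy => [r||] //= _; lra.
- have [y [Py Hy]] := H 1 ltac:(lra).
  have := InfE_le Py; rewrite E; by case: y Py Hy.
Qed.

Lemma ERle_trans_Fin y a b : ER_le y (Fin a) -> a <= b -> ER_le y (Fin b).
Proof. case: y => //= r; lra. Qed.

Lemma gbar_fin d (g : vec d -> ER) (hA3 : penA3 g) (hA4 : penA4 g) t : 0 <= t ->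
  exists G, gbar g t = Fin G /\ 0 <= G /\ (forall a, ER_le (g a) (Fin t) -> norm1 a <= G).
Proof.
move=> Ht.
have [r Hr] := hA3 t.
have Hb : forall a, ER_le (g a) (Fin t) -> norm1 a <= r.
{ move=> a Ha; apply: Rnot_lt_le => Hlt; exact: (Hr a Hlt Ha). }
have H1 : ER_le (gbar g t) (Fin r).
{ apply: SupE_le => y [a [Ha ->]] /=; exact: Hb. }
have H0 : ER_le (Fin 0) (gbar g t).
{ apply: le_SupE; exists (fun _ => 0); split; first by rewrite hA4 /=.
  by rewrite norm1_0. }
case E: (gbar g t) H1 H0 => [G||] //= _ HG.
exists G; split => //; split => // a Ha.
have := @le_SupE (fun y => exists a : vec d, ER_le (g a) (Fin t) /\ y = Fin (norm1 a)) (Fin (norm1 a))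
  ltac:(by exists a).
by rewrite -/(gbar g t) E.
Qed.

Lemma gbar_rc d (g : vec d -> ER) (hA2 : penA2 g) (hA3 : penA3 g) t G :
  (forall a, ER_le (g a) (Fin t) -> norm1 a <= G) ->
  forall dl, 0 < dl -> exists eps, 0 < eps /\
    forall a, ER_le (g a) (Fin (t + eps)) -> norm1 a <= G + dl.
Proof.
move=> HG dl Hdl; apply: NNPP => Hn.
have Hs : forall k : nat, exists a, ER_le (g a) (Fin (t + / INR (S k))) /\ G + dl < norm1 a.
{ move=> k; apply: NNPP => Hk; apply: Hn; exists (/ INR (S k)); split.
  - apply: Rinv_0_lt_compat; apply: lt_0_INR; lia.
  - move=> a Ha; apply: Rnot_lt_le => Hlt; apply: Hk; by exists a. }
pose u k := proj1_sig (constructive_indefinite_description _ (Hs k)).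
have Hu : forall k, ER_le (g (u k)) (Fin (t + / INR (S k))) /\ G + dl < norm1 (u k).
{ move=> k; exact: (proj2_sig (constructive_indefinite_description _ (Hs k))). }
have Hinv : forall k, / INR (S k) <= 1.
{ move=> k; rewrite -Rinv_1; apply: Rinv_le_contravar; first lra.
  rewrite S_INR; have := pos_INR k; lra. }
have [r Hr] := hA3 (t + 1).
have Hbd : forall k j, Rabs (u k j) <= r.
{ move=> k j; apply: Rle_trans (abs_le_norm1 _ _) _.
  apply: Rnot_lt_le => Hlt; apply: (Hr _ Hlt).
  apply: ERle_trans_Fin (proj1 (Hu k)) _; have := Hinv k; lra. }
have [phi [Hphi [b Hb]]] := bwd _ u r Hbd.
have Hcv := cvs_norm1 _ (fun k => u (phi k)) b Hb.
have C1 : G + dl <= norm1 b.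
{ apply: Rnot_lt_le => Hlt.
  have [N HN] := Hcv (G + dl - norm1 b) ltac:(lra).
  have := HN N (le_n N); have := norm1_tri (u (phi N)) b; have := proj2 (Hu (phi N)); lra. }
have C2 : ER_le (g b) (Fin t).
{ apply: NNPP => Hgb.
  have [t' [Ht' Hlt']] : exists t', t < t' /\ ER_lt (Fin t') (g b).
  { case E: (g b) Hgb => [v||] //= Hgb.
    - exists ((t + v) / 2); rewrite /ER_lt /=; lra.
    - exists (t + 1); rewrite /ER_lt /=; split => //; lra. }
  have [dt [Hdt Hdt2]] := hA2 b t' Hlt'.
  have [N1 HN1] := Hcv dt Hdt.
  have [N2 [HN2 HN2']] := archimed_cor1 (t' - t) ltac:(lra).
  pose k := Nat.max N1 N2.
  have Hk := HN1 k ltac:(lia).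
  apply: (Hdt2 _ Hk).
  apply: ERle_trans_Fin (proj1 (Hu (phi k))) _.
  have := sincr_ge Hphi k => Hpk.
  enough (/ INR (S (phi k)) <= / INR N2) by lra.
  apply: Rinv_le_contravar; first by apply: lt_0_INR.
  apply: le_INR; lia. }
have := HG b C2; lra.
Qed.

Lemma fin_eps n (P : R -> 'I_n -> Prop) :
  (forall e e' i, P e i -> 0 < e' -> e' <= e -> P e' i) ->
  (forall i, exists e, 0 < e /\ P e i) -> exists e, 0 < e /\ forall i, P e i.
Proof.
move=> Hm H.
have Hc : forall c, exists e, 0 < e /\ forall i : 'I_n, lt (nat_of_ord i) c -> P e i.
{ elim=> [|c [e [He IH]]]; first by exists 1; split; [lra| move=> i Hi; lia].
  case: (@ltP c n) => Hcn.
  - pose i0 := Ordinal (introT ltP Hcn).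
    have [e0 [He0 HP0]] := H i0.
    exists (Rmin e e0); split; first by apply: Rmin_glb_lt.
    move=> i Hi; case: (Nat.eq_dec (nat_of_ord i) c) => Hic.
    + have -> : i = i0 by apply: val_inj.
      apply: Hm HP0 _ (Rmin_r _ _); by apply: Rmin_glb_lt.
    + apply: Hm (IH i _) _ (Rmin_l _ _); [lia| by apply: Rmin_glb_lt].
  - exists e; split => // i Hi; apply: IH. have := ltn_ord i => /ltP; lia. }
have [e [He HP]] := Hc n; exists e; split => // i; apply: HP; apply/ltP; exact: ltn_ord.
Qed.

Lemma sqrt_ge_abs x : Rabs x = sqrt (x * x).
Proof. by rewrite -sqrt_Rsqr_abs. Qed.

Lemma CS_abs k (a b : vec k) : Rabs (sumR (fun i => a i * b i)) <= norm2 a * norm2 b.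
Proof.
set A := sumR (fun i => a i * a i); set B := sumR (fun i => b i * b i);
set C := sumR (fun i => a i * b i).
have HA : 0 <= A by apply: sumR_ge0 => i; nra.
have HB : 0 <= B by apply: sumR_ge0 => i; nra.
have Q : forall l, 0 <= l * l * A + 2 * l * C + B.
{ move=> l.
  have -> : l * l * A + 2 * l * C + B = sumR (fun i => (l * a i + b i) * (l * a i + b i)).
  { rewrite (sumR_ext _ (fun i => l * l * (a i * a i) + (2 * l * (a i * b i) + b i * b i))); last by move=> i; ring.
    rewrite !sumR_split -!sumR_distr /A /B /C; ring. }
  apply: sumR_ge0 => i /=; exact: Rle_0_sqr. }
have HC : C * C <= A * B.
{ case: (Req_dec A 0) => HA0.
  - case: (Req_dec C 0) => HC0; first by rewrite HC0; nra.
    have := Q (- (B + 1) / (2 * C)); rewrite HA0.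
    have -> : 2 * (- (B + 1) / (2 * C)) * C = - (B + 1) by field.
    lra.
  - have := Q (- C / A).
    have Hl : (- C / A) * A = - C by field.
    nra. }
rewrite sqrt_ge_abs /norm2 -/A -/B -sqrt_mult_alt //.
apply: sqrt_le_1_alt; exact: HC.
Qed.

Lemma bigmax_le q (F : 'I_q -> R) c : 0 <= c -> (forall j, F j <= c) -> \big[Rmax/0]_(j < q) F j <= c.
Proof. move=> Hc H; apply: (big_ind (fun x => x <= c)) => // x y Hx Hy; exact: Rmax_lub. Qed.

Lemma le_bigmax_seq (I : eqType) (s : seq I) (F : I -> R) j : j \in s -> F j <= \big[Rmax/0]_(i <- s) F i.
Proof.
elim: s => [|x s IH] //; rewrite in_cons big_cons => /orP [/eqP ->|Hj]; first exact: Rmax_l.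
apply: Rle_trans (Rmax_r _ _); exact: IH.
Qed.

Lemma le_bigmax q (F : 'I_q -> R) j : F j <= \big[Rmax/0]_(j < q) F j.
Proof. apply: le_bigmax_seq; exact: mem_index_enum. Qed.

Lemma frob_resid m d n (X : 'I_n -> vec m) (D : mat m d) (A : 'I_n -> vec d) (N : mat m d) :
  frob (resid X D A) N = sumR (fun i => sumR (fun j => A i j * sumR (fun r => (X i r - mulmv D (A i) r) * N r j))).
Proof.
rewrite /frob /resid.
transitivity (sumR (fun r => sumR (fun j => sumR (fun i => A i j * ((X i r - mulmv D (A i) r) * N r j))))).
{ apply: sumR_ext => r; apply: sumR_ext => j /=; rewrite Rmult_comm sumR_distr; apply: sumR_ext => i; ring. }
transitivity (sumR (fun r => sumR (fun i => sumR (fun j => A i j * ((X i r - mulmv D (A i) r) * N r j))))).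
{ apply: sumR_ext => r; exact: sumR_exch. }
rewrite sumR_exch; apply: sumR_ext => i; rewrite sumR_exch; apply: sumR_ext => j.
rewrite sumR_distr; apply: sumR_ext => r; ring.
Qed.

Lemma norm2_ge0 k (a : vec k) : 0 <= norm2 a.
Proof. exact: sqrt_pos. Qed.

Lemma dual_bound m d n (X : 'I_n -> vec m) (D : mat m d) (A : 'I_n -> vec d) :
  ER_le (dualnorm12 (resid X D A))
    (Fin (sumR (fun i => norm2 (subv (X i) (mulmv D (A i))) * norm1 (A i)))).
Proof.
apply: SupE_le => y [N [HN ->]] /=; rewrite frob_resid.
apply: sumR_le => i; rewrite /norm1 sumR_distr; apply: sumR_le => j.
set S := sumR _.
have HS : Rabs S <= norm2 (subv (X i) (mulmv D (A i))) * norm2 (fun r => N r j)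
  := CS_abs _ (fun r => X i r - mulmv D (A i) r) (fun r => N r j).
have HNj : norm2 (fun r => N r j) <= 1.
{ apply: Rle_trans HN; exact: (le_bigmax _ (fun j => norm2 (fun r => N r j)) j). }
have H1 := Rle_abs (A i j * S); rewrite Rabs_mult in H1.
have H2 := Rabs_pos (A i j). have H3 := norm2_ge0 _ (subv (X i) (mulmv D (A i))).
have H4 := norm2_ge0 _ (fun r => N r j).
have H5 : Rabs (A i j) * Rabs S <= Rabs (A i j) * (norm2 (subv (X i) (mulmv D (A i))) * norm2 (fun r => N r j)).
{ exact: Rmult_le_compat_l. }
have H6 : norm2 (subv (X i) (mulmv D (A i))) * norm2 (fun r => N r j) <= norm2 (subv (X i) (mulmv D (A i))).
{ nra. }
nra.
Qed.

Lemma fx_le m d (g : vec d -> ER) (hA4 : penA4 g) (x : vec m) (D : mat m d) :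
  ER_le (fx g x D) (Fin (/ 2 * norm2 x ^ 2)).
Proof.
have H := @InfE_le (fun y => exists a : vec d, y = Lx g x D a) (Lx g x D (fun _ => 0))
  ltac:(by exists (fun _ => 0)).
rewrite /fx; case E: (InfE _) H => [f||] //=; rewrite /Lx hA4 /=.
have -> : norm2 (subv x (mulmv D (fun _ => 0))) = norm2 x.
{ rewrite /norm2; f_equal; apply: sumR_ext => r; rewrite /subv /mulmv.
  rewrite (sumR_ext _ (fun _ => 0)) ?sumR_const; last by move=> j; ring.
  rewrite Rmult_0_r Rminus_0_r; reflexivity. }
all: move=> ?; lra.
Qed.

Lemma inA_bound m d (g : vec d -> ER) (hA1 : penA1 g) (hA4 : penA4 g) (x : vec m) (D : mat m d)
  (a : vec d) eps : 0 < eps ->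
  ER_le (Lx g x D a) (ER_add (fx g x D) (Fin eps)) ->
  ER_le (g a) (Fin (/ 2 * norm2 x ^ 2 + eps)) /\
  norm2 (subv x (mulmv D a)) <= norm2 x + sqrt (2 * eps).
Proof.
move=> He H.
have Hf := fx_le _ _ g hA4 x D.
have Hg := hA1 a.
move: H; rewrite /Lx.
case: (fx g x D) Hf => [f||] //= Hf; case: (g a) Hg => [v||] //= Hg H.
set q := norm2 (subv x (mulmv D a)) in H *.
set nx := norm2 x in Hf *.
have Hq : 0 <= q by exact: sqrt_pos.
have Hnx : 0 <= nx by exact: sqrt_pos.
simpl in *. have Hqq : 0 <= / 2 * (q * (q * 1)) by nra. split; first lra.
have Hs : 0 <= sqrt (2 * eps) by exact: sqrt_pos.
have Hs2 : sqrt (2 * eps) * sqrt (2 * eps) = 2 * eps by apply: sqrt_sqrt; lra.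
have : q * q <= (nx + sqrt (2 * eps)) * (nx + sqrt (2 * eps)) by simpl in *; nra.
nra.
Qed.

Lemma ER_sum_Fin n (F : 'I_n -> ER) (f : 'I_n -> R) : (forall i, F i = Fin (f i)) -> ER_sum F = Fin (sumR f).
Proof.
move=> H; rewrite /ER_sum /sumR.
apply: (big_ind2 (fun x y => x = Fin y)) => //; first by move=> x1 x2 y1 y2 -> ->.
Qed.

Lemma inv01 x : x = 0 \/ 1 <= x -> 0 <= / x <= 1.
Proof.
case=> [->|Hx]; first by rewrite Rinv_0; lra.
split; first by apply: Rlt_le; apply: Rinv_0_lt_compat; lra.
rewrite -Rinv_1; apply: Rinv_le_contravar; lra.
Qed.

Lemma INR_01 n : INR n = 0 \/ 1 <= INR n.
Proof. case: n => [|n]; [by left | right; apply: (le_INR 1); lia]. Qed.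

Theorem mainTheorem7 (m d n : nat) (g : vec d -> ER)
  (hA1 : penA1 g) (hA2 : penA2 g) (hA3 : penA3 g) (hA4 : penA4 g)
  (X : 'I_n -> vec m) (D : mat m d) :
  ER_le (LX g X D)
    (ER_scale (/ INR n)
       (ER_sum (fun i => ER_scale (norm2 (X i)) (gbar g (/ 2 * (norm2 (X i)) ^ 2)))))
  /\
  ER_le (CX g X D)
    (ER_scale (/ (2 * INR n))
       (ER_sum (fun i => ER_sq (gbar g (/ 2 * (norm2 (X i)) ^ 2))))).
Proof.
have Ht : forall i, 0 <= / 2 * (norm2 (X i)) ^ 2.
{ move=> i; apply: Rmult_le_pos; [lra| exact: pow2_ge_0]. }
have HG : forall i, exists G, gbar g (/ 2 * (norm2 (X i)) ^ 2) = Fin G /\ 0 <= G /\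
   (forall a, ER_le (g a) (Fin (/ 2 * (norm2 (X i)) ^ 2)) -> norm1 a <= G).
{ move=> i; exact: gbar_fin hA3 hA4 _ (Ht i). }
pose G i := proj1_sig (constructive_indefinite_description _ (HG i)).
have HGs : forall i, gbar g (/ 2 * (norm2 (X i)) ^ 2) = Fin (G i) /\ 0 <= G i /\
   (forall a, ER_le (g a) (Fin (/ 2 * (norm2 (X i)) ^ 2)) -> norm1 a <= G i).
{ move=> i; exact: (proj2_sig (constructive_indefinite_description _ (HG i))). }
have Hunif : forall dl, 0 < dl -> exists eps, 0 < eps /\ forall i a,
   ER_le (g a) (Fin (/ 2 * (norm2 (X i)) ^ 2 + eps)) -> norm1 a <= G i + dl.
{ move=> dl Hdl.
  apply: (fin_eps _ (fun e i => forall a, ER_le (g a) (Fin (/ 2 * (norm2 (X i)) ^ 2 + e)) -> norm1 a <= G i + dl)).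
  - move=> e e' i H He' Hle a Ha; apply: H; apply: ERle_trans_Fin Ha _; lra.
  - move=> i; have [eps [He H]] := gbar_rc _ _ hA2 hA3 _ _ (proj2 (proj2 (HGs i))) dl Hdl.
    by exists eps. }
rewrite (ER_sum_Fin _ _ (fun i => norm2 (X i) * G i)); last by move=> i; rewrite (proj1 (HGs i)).
rewrite (ER_sum_Fin _ _ (fun i => G i * G i)); last by move=> i; rewrite (proj1 (HGs i)).
rewrite /=.
have Hc1 := inv01 _ (INR_01 n).
have Hc2 : 0 <= / (2 * INR n) <= 1.
{ apply: inv01; case: (INR_01 n) => H; [left; rewrite H; ring| right; lra]. }
have HGpos : forall i, 0 <= G i by move=> i; exact: (proj1 (proj2 (HGs i))).
set SG := sumR G.
have HSG : 0 <= SG by exact: sumR_ge0.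
have Hn0 := pos_INR n.
split.
-
  apply: InfE_le_Fin => e He.
  set Sx := sumR (fun i => norm2 (X i)).
  have HSx : 0 <= Sx by apply: sumR_ge0 => i; exact: norm2_ge0.
  set S1 := sumR (fun i => norm2 (X i) * G i).
  have HS1 : 0 <= S1 by apply: sumR_ge0 => i; apply: Rmult_le_pos; [exact: norm2_ge0| exact: HGpos].
  pose dl := Rmin 1 (e / (2 * (Sx + 1))).
  have Hdl0 : 0 < dl by apply: Rmin_glb_lt; [lra| apply: Rdiv_lt_0_compat; lra].
  have Hdl1 : dl <= 1 by exact: Rmin_l.
  have HdlSx : dl * Sx <= e / 2.
  { have H1 : dl <= e / (2 * (Sx + 1)) by exact: Rmin_r.
    have H2 : e / (2 * (Sx + 1)) * (2 * (Sx + 1)) = e by field; lra.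
    nra. }
  have [eps0 [He0 Hu]] := Hunif dl Hdl0.
  pose c := e / (2 * (SG + INR n + 1)).
  have Hc0 : 0 < c by apply: Rdiv_lt_0_compat; lra.
  have HcS : c * (SG + INR n) <= e / 2.
  { have H2 : c * (2 * (SG + INR n + 1)) = e by rewrite /c; field; lra.
    nra. }
  pose eps := Rmin eps0 (c * c / 2).
  have Heps : 0 < eps by apply: Rmin_glb_lt; [lra| nra].
  have Hs : sqrt (2 * eps) <= c.
  { rewrite -(sqrt_square c); last lra.
    apply: sqrt_le_1_alt; have := Rmin_r eps0 (c * c / 2); rewrite -/eps; lra. }
  eexists; split; first by exists eps; split; [exact: Heps| reflexivity].
  apply: SupE_le => z [A [HA ->]].
  have Hterm : forall i, norm2 (subv (X i) (mulmv D (A i))) * norm1 (A i) <=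
      norm2 (X i) * G i + (dl * norm2 (X i) + (c * G i + c)).
  { move=> i; have [Hg Hr] := inA_bound _ _ g hA1 hA4 (X i) D (A i) _ Heps (HA i).
    have Hn1 : norm1 (A i) <= G i + dl.
    { apply: Hu; apply: ERle_trans_Fin Hg _; have := Rmin_l eps0 (c * c / 2); rewrite -/eps; lra. }
    have := norm1_ge0 (A i); have := norm2_ge0 _ (subv (X i) (mulmv D (A i)));
    have := norm2_ge0 _ (X i); have := HGpos i.
    nra. }
  have Hsum := sumR_le _ _ Hterm.
  rewrite !sumR_split sumR_const -/S1 in Hsum.
  have E1 : sumR (fun i => dl * norm2 (X i)) = dl * Sx by rewrite /Sx sumR_distr.
  have E2 : sumR (fun i => c * G i) = c * SG by rewrite /SG sumR_distr.
  rewrite E1 E2 in Hsum.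
  have HW : sumR (fun i => norm2 (subv (X i) (mulmv D (A i))) * norm1 (A i)) <= S1 + e by nra.
  have Hdb := dual_bound _ _ _ X D A.
  case: (dualnorm12 (resid X D A)) Hdb => [w||] //= Hw.
  + have : / INR n * w <= / INR n * (S1 + e) by apply: Rmult_le_compat_l; lra.
    nra.
  + case: (Req_dec_T (/ INR n) 0) => _ //=. nra.
-
  apply: InfE_le_Fin => e He.
  set S2 := sumR (fun i => G i * G i).
  pose dl := Rmin 1 (e / (2 * SG + INR n + 1)).
  have Hdl0 : 0 < dl by apply: Rmin_glb_lt; [lra| apply: Rdiv_lt_0_compat; lra].
  have Hdl1 : dl <= 1 by exact: Rmin_l.
  have Hdl2 : dl * (2 * SG + INR n) <= e.
  { have H1 : dl <= e / (2 * SG + INR n + 1) by exact: Rmin_r.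
    have H2 : e / (2 * SG + INR n + 1) * (2 * SG + INR n + 1) = e by field; lra.
    nra. }
  have [eps0 [He0 Hu]] := Hunif dl Hdl0.
  eexists; split; first by exists eps0; split; [exact: He0| reflexivity].
  apply: SupE_le => z [A [HA ->]] /=.
  have Hterm : forall i, norm1 (A i) ^ 2 <= G i * G i + (dl * (2 * G i) + dl).
  { move=> i; have [Hg _] := inA_bound _ _ g hA1 hA4 (X i) D (A i) _ He0 (HA i).
    have Hn1 : norm1 (A i) <= G i + dl by apply: Hu.
    have := norm1_ge0 (A i); have := HGpos i.
    simpl; nra. }
  have Hsum := sumR_le _ _ Hterm.
  rewrite !sumR_split sumR_const -/S2 in Hsum.
  have E1 : sumR (fun i => dl * (2 * G i)) = dl * (2 * SG).
  { rewrite -Rmult_assoc /SG sumR_distr. apply: sumR_ext => i; ring. }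
  rewrite E1 in Hsum.
  have Hsum' : sumR (fun i => norm1 (A i) * (norm1 (A i) * 1)) <= S2 + e.
  { change (sumR (fun i => norm1 (A i) ^ 2) <= S2 + e); lra. }
  have := Rmult_le_compat_l _ _ _ (proj1 Hc2) Hsum'.
  nra.
Qed.
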